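(* Let $\mathcal{M}=(S,A,AP,L,I)$ be an interval Markov decision process and let $s,t\in S$ with $s\sim_{(\forall)} t$. Then for every PCTL state formula $\varphi$ we have $s\models_{(\forall)}\varphi$ if and only if $t\models_{(\forall)}\varphi$.
   Context: An interval MDP (IMDP) is a tuple $(S,A,AP,L,I)$ with $S$ a finite set of states, $A$ a finite set of actions, $AP$ a finite set of atomic propositions, $L:S\to 2^{AP}$ a labelling, and $I:S\times A\times S\to\mathbb{I}$ where $\mathbb{I}$ is a set of subintervals of $[0,1]$. For $s\in S,a\in A$, write $s\xrightarrow{a}\mu$ if $\mu$ is a probability distribution on $S$ with $\mu(s')\in I(s,a,s')$ for all $s'$; the set $\Gamma_{s,a}=\{\mu\mid s\xrightarrow{a}\mu\}$ is required to be non-empty. Paths are sequences of states; $\mathrm{last}(\omega)$ is the last state of a finite path. A scheduler is a function $\sigma$ from finite paths to distributions over $A$; a nature is a function $\pi$ mapping a finite path $\omega$ and action $a$ to an element of $\Gamma_{\mathrm{last}(\omega),a}$. $\Sigma,\Pi$ denote the sets of all schedulers and natures. For a state $s$, $\sigma$, $\pi$, $\Pr^{\sigma,\pi}_s$ is the unique probability measure on infinite paths (with the cylinder $\sigma$-algebra) such that the cylinder of the one-state path $s'$ has probability $1$ if $s'=s$ and $0$ otherwise, and $\Pr^{\sigma,\pi}_s[\mathrm{Cyl}(\omega s')]=\Pr^{\sigma,\pi}_s[\mathrm{Cyl}(\omega)]\cdot\sum_{a\in A}\sigma(\omega)(a)\,\pi(\omega,a)(s')$. PCTL: state formulas $\varphi::=\mathit{true}\mid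 x\mid\neg\varphi\mid\varphi_1\wedge\varphi_2\mid \mathsf{P}_{\bowtie p}(\psi)$ and path formulas $\psi::=\mathsf{X}\varphi\mid\varphi_1\mathsf{U}\varphi_2\mid\varphi_1\mathsf{U}^{\le k}\varphi_2$, with $x\in AP$, rational $p\in[0,1]$, $\bowtie\in\{\le,<,\ge,>\}$, $k\in\mathbb{N}$. The relation $\models_{(\forall)}$: $s\models x$ iff $x\in L(s)$; negation and conjunction as usual; $s\models_{(\forall)}\mathsf{P}_{\bowtie p}(\psi)$ iff for all $\sigma\in\Sigma$ and all $\pi\in\Pi$, $\Pr^{\sigma,\pi}_s[\{\omega\mid\omega\models_{(\forall)}\psi\}]\bowtie p$. For an infinite path $\omega=s_1s_2\cdots$: $\omega\models\mathsf{X}\varphi$ iff $s_2\models\varphi$; $\omega\models\varphi_1\mathsf{U}^{\le k}\varphi_2$ iff there is $i\le k$ with $s_i\models\varphi_2$ and $s_j\models\varphi_1$ for all $j<i$; $\omega\models\varphi_1\mathsf{U}\varphi_2$ iff $\omega\models\varphi_1\mathsf{U}^{\le k}\varphi_2$ for some $k\in\mathbb{N}$. Cooperative bisimulation: write $s\to\mu$ if $\mu$ lies in the convex hull of $\bigcup_{a\in A}\Gamma_{s,a}$. An equivalence relation $R\subseteq S\times S$ is a probabilistic $(\forall)$-bisimulation if for all $(s,t)\in R$: $L(s)=L(t)$, and for each $s\to\mu$ there is $t\to\nu$ with $\mu(C)=\nu(C)$ for every equivalence class $C$ of $R$. $s\sim_{(\forall)}t$ iff some probabilistic $(\forall)$-bisimulation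 contains $(s,t)$. *)

(* Defs.v *)
From HB Require Import structures.
From mathcomp Require Import all_boot all_order all_algebra.
From mathcomp Require Import all_classical all_reals.
From mathcomp Require Import topology normedtype sequences measure.
Set Implicit Arguments. Unset Strict Implicit. Unset Printing Implicit Defensive.
Import Order.TTheory GRing.Theory Num.Theory.
Import numFieldNormedType.Exports.
Local Open Scope classical_set_scope.
Local Open Scope ring_scope.

Section IMDP.
Variables (R : realType) (S A AP : finType).
Variables (L : S -> {set AP}) (I : S -> A -> S -> interval R).

Definition is_dist (T : finType) (mu : T -> R) : Prop :=
  (forall x, 0 <= mu x) /\ \sum_(x : T) mu x = 1.

Definition Gamma (s : S) (a : A) : set (S -> R) :=
  [set mu | is_dist mu /\ forall s', mu s' \in I s a s'].

Definition imdp_wf : Prop :=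
  (forall s a s' x, x \in I s a s' -> x \in `[0, 1]%R) /\
  (forall s a, exists mu, Gamma s a mu).

(* Finite paths are non-empty sequences of states, represented as [x :: w];
   their last state is [last x w].  Schedulers and natures are functions on
   finite paths; their constraints are imposed on non-empty sequences. *)
Definition scheduler (sigma : seq S -> A -> R) : Prop :=
  forall x w, is_dist (sigma (x :: w)).

Definition nature (pi : seq S -> A -> S -> R) : Prop :=
  forall x w a, Gamma (last x w) a (pi (x :: w) a).

Definition ipath := nat -> S.

Definition Cyl (w : seq S) : set ipath :=
  [set om | forall i, (i < size w)%N -> om i = nth (om i) w i].

Definition cylinders : set (set ipath) :=
  [set C | exists x w, C = Cyl (x :: w)].

Definition cyl_measurable : set (set ipath) := <<s setT, cylinders >>.

Definition prob_measure (P : set ipath -> R) : Prop :=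
  [/\ forall B, cyl_measurable B -> 0 <= P B,
      P set0 = 0,
      P setT = 1 &
      forall F : nat -> set ipath, (forall n, cyl_measurable (F n)) ->
        trivIset setT F ->
        (fun n => \sum_(0 <= i < n) P (F i)) @ \oo --> P (\bigcup_n F n)].

Definition is_Pr (s : S) (sigma : seq S -> A -> R) (pi : seq S -> A -> S -> R)
    (P : set ipath -> R) : Prop :=
  [/\ prob_measure P,
      forall s', P (Cyl [:: s']) = (if s' == s then 1 else 0) &
      forall x w s', P (Cyl (rcons (x :: w) s')) =
        P (Cyl (x :: w)) * \sum_(a : A) sigma (x :: w) a * pi (x :: w) a s'].

End IMDP.

Inductive cmp := CLe | CLt | CGe | CGt.

Inductive sform (AP : Type) :=
| FTrue
| FAtom of AP
| FNot of sform AP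
| FAnd of sform AP & sform AP
| FProb of cmp & rat & pform AP
with pform (AP : Type) :=
| FNext of sform AP
| FUntil of sform AP & sform AP
| FBUntil of sform AP & sform AP & nat.

Arguments FTrue {AP}.

Definition cmp_sem (R : realType) (c : cmp) (x y : R) : Prop :=
  match c with
  | CLe => x <= y | CLt => x < y | CGe => x >= y | CGt => x > y
  end.

Section Semantics.
Variables (R : realType) (S A AP : finType).
Variables (L : S -> {set AP}) (I : S -> A -> S -> interval R).

(* om |= phi1 U^{<=k} phi2, positions are 1-based in the paper:
   om = s_1 s_2 ..., so position i corresponds to index i.-1 *)
Fixpoint sat (s : S) (phi : sform AP) {struct phi} : Prop :=
  match phi with
  | FTrue => True
  | FAtom x => x \in L s
  | FNot phi' => ~ sat s phi'
  | FAnd phi1 phi2 => sat s phi1 /\ sat s phi2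
  | FProb c p psi =>
      forall sigma pi, scheduler sigma -> nature I pi ->
      forall P, is_Pr s sigma pi P ->
      cmp_sem c (P [set om | psat om psi]) (ratr p)
  end
with psat (om : ipath S) (psi : pform AP) {struct psi} : Prop :=
  match psi with
  | FNext phi => sat (om 1%N) phi
  | FUntil phi1 phi2 =>
      exists k : nat, exists i : nat, [/\ (1 <= i <= k)%N, sat (om i.-1) phi2 &
        forall j, (1 <= j < i)%N -> sat (om j.-1) phi1]
  | FBUntil phi1 phi2 k =>
      exists i : nat, [/\ (1 <= i <= k)%N, sat (om i.-1) phi2 &
        forall j, (1 <= j < i)%N -> sat (om j.-1) phi1]
  end.

Definition ctrans (s : S) (mu : S -> R) : Prop :=
  exists (n : nat) (lam : 'I_n -> R) (a : 'I_n -> A) (nu : 'I_n -> S -> R),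
    [/\ forall i, 0 <= lam i,
        \sum_(i < n) lam i = 1,
        forall i, Gamma I s (a i) (nu i) &
        forall s', mu s' = \sum_(i < n) lam i * nu i s'].

Definition equivalence_rel (Rel : rel S) : Prop :=
  [/\ reflexive Rel, symmetric Rel & transitive Rel].

Definition mass_class (Rel : rel S) (mu : S -> R) (c : S) : R :=
  \sum_(x | Rel c x) mu x.

Definition forall_bisimulation (Rel : rel S) : Prop :=
  equivalence_rel Rel /\
  forall s t, Rel s t ->
    L s = L t /\
    forall mu, ctrans s mu ->
      exists nu, ctrans t nu /\ forall c, mass_class Rel mu c = mass_class Rel nu c.

Definition forall_bisimilar (s t : S) : Prop :=
  exists Rel, forall_bisimulation Rel /\ Rel s t.

End Semantics.

Fixpoint wf_sform (AP : Type) (phi : sform AP) : bool :=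
  match phi with
  | FTrue => true
  | FAtom _ => true
  | FNot phi' => wf_sform phi'
  | FAnd phi1 phi2 => wf_sform phi1 && wf_sform phi2
  | FProb _ p psi => ((0 <= p) && (p <= 1))%R && wf_pform psi
  end
with wf_pform (AP : Type) (psi : pform AP) : bool :=
  match psi with
  | FNext phi => wf_sform phi
  | FUntil phi1 phi2 => wf_sform phi1 && wf_sform phi2
  | FBUntil phi1 phi2 _ => wf_sform phi1 && wf_sform phi2
  end.

(* Main.v *)
Require Import Defs.
From HB Require Import structures.
From mathcomp Require Import all_boot all_order all_algebra.
From mathcomp Require Import all_classical all_reals.
From mathcomp Require Import topology normedtype sequences measure.
From mathcomp Require Import ereal lebesgue_measure.
From mathcomp Require Import lra zify.
Set Implicit Arguments. Unset Strict Implicit. Unset Printing Implicit Defensive.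
Import Order.TTheory GRing.Theory Num.Theory.
Import numFieldNormedType.Exports.
Local Open Scope classical_set_scope.
Local Open Scope ring_scope.
Lemma lebJ (R : realType) (a b : R) : a <= b -> lebesgue_measure [set` `[a, b[] = (b - a)%:E.
Proof. move=> ab. rewrite lebesgue_measure_itv /=. case: ltP => /=.
 by rewrite lte_fin => _; rewrite -EFinB.
 rewrite lee_fin => ba. have -> : b = a by apply/eqP; rewrite eq_le ab ba. by rewrite subrr.
Qed.

Lemma disc_ivt (R : realType) (g : nat -> R) (u : R) (N : nat) :
  g 0%N <= u -> u < g N -> exists k, (k < N)%N /\ g k <= u < g k.+1.
Proof.
move=> h0; elim: N => [|N IH] hN; first by move: (le_lt_trans h0 hN); rewrite ltxx.
case: (leP (g N) u) => hgN; first by exists N; rewrite hgN hN.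
by have [k [kN hk]] := IH hgN; exists k; split => //; apply: ltnW.
Qed.

Section Exist.
Variables (R : realType) (S A : finType) (I : S -> A -> S -> interval R).
Variables (s0 : S) (sig : seq S -> A -> R) (pi : seq S -> A -> S -> R).
Hypotheses (Hsig : scheduler sig) (Hpi : nature I pi).

Definition step (h : seq S) (y : S) : R := \sum_(a : A) sig h a * pi h a y.

Lemma step_ge0 x w y : 0 <= step (x :: w) y.
Proof.
apply: sumr_ge0 => a _; apply: mulr_ge0; first by case: (Hsig x w).
by case: (Hpi x w a) => [[+ _] _]; apply.
Qed.

Lemma step_sum x w : \sum_y step (x :: w) y = 1.
Proof.
rewrite /step exchange_big /=; case: (Hsig x w) => _ <-.
apply: eq_bigr => a _; rewrite -mulr_sumr.
by case: (Hpi x w a) => [[_ ->] _]; rewrite mulr1.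
Qed.

Definition cum (h : seq S) (k : nat) : R := \sum_(y <- take k (enum S)) step h y.

Lemma cum0 h : cum h 0 = 0.
Proof. by rewrite /cum take0 big_nil. Qed.

Lemma cumS h k : (k < #|S|)%N -> cum h k.+1 = cum h k + step h (nth s0 (enum S) k).
Proof.
move=> hk; rewrite /cum (take_nth s0); last by rewrite -cardE.
by rewrite -cats1 big_cat big_seq1.
Qed.

Lemma cum_over h k : (#|S| <= k)%N -> cum h k = \sum_y step h y.
Proof.
move=> hk; rewrite /cum take_oversize; last by rewrite -cardE.
by rewrite big_enum.
Qed.

Lemma cum_mono x w k k' : (k <= k')%N -> cum (x :: w) k <= cum (x :: w) k'.
Proof.
elim: k' => [|k' IH]; first by rewrite leqn0 => /eqP ->.
rewrite leq_eqVlt => /orP [/eqP -> //| hk].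
apply: le_trans (IH hk) _.
case: (ltnP k' #|S|) => hk'.
  by rewrite cumS // lerDl step_ge0.
by rewrite !(@cum_over _ k') ?(@cum_over _ k'.+1) // (leq_trans hk').
Qed.

Lemma cum_ge0 x w k : 0 <= cum (x :: w) k.
Proof. by rewrite -(cum0 (x :: w)); apply: cum_mono. Qed.

Lemma cum_le1 x w k : cum (x :: w) k <= 1.
Proof.
case: (leqP #|S| k) => hk; first by rewrite cum_over // step_sum.
by rewrite -(step_sum x w) -(@cum_over _ #|S|) //; apply: cum_mono; apply: ltnW.
Qed.

Fixpoint qr (r : seq S) : R :=
  if r is x :: r' then (if r' is [::] then (x == s0)%:R else qr r' * step (rev r') x)
  else 1.
Fixpoint lr (r : seq S) : R :=
  if r is x :: r' then (if r' is [::] then 0 else lr r' + qr r' * cum (rev r') (index x (enum S)))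
  else 0.
Definition q (w : seq S) := qr (rev w).
Definition lo (w : seq S) := lr (rev w).

Lemma q1 x : q [:: x] = (x == s0)%:R. Proof. by []. Qed.
Lemma lo1 x : lo [:: x] = 0. Proof. by []. Qed.

Lemma q_rcons x w y : q (rcons (x :: w) y) = q (x :: w) * step (x :: w) y.
Proof.
rewrite /q rev_rcons /=; case E: (rev (x :: w)) => [|z r].
  by move: (congr1 size E); rewrite size_rev.
by rewrite -E revK.
Qed.

Lemma lo_rcons x w y : lo (rcons (x :: w) y) = lo (x :: w) + q (x :: w) * cum (x :: w) (index y (enum S)).
Proof.
rewrite /q /lo rev_rcons /=; case E: (rev (x :: w)) => [|z r].
  by move: (congr1 size E); rewrite size_rev.
by rewrite -E revK.
Qed.

Lemma q_ge0 w : 0 <= q w.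
Proof.
elim/last_ind: w => [|w y IH]; first by rewrite /q /=.
case: w IH => [|x w] IH; first by rewrite q1 ler0n.
by rewrite q_rcons mulr_ge0 // step_ge0.
Qed.

Definition J (w : seq S) : interval R := `[lo w, lo w + q w[.

Lemma inJ w u : (u \in J w) = (lo w <= u) && (u < lo w + q w).
Proof. by rewrite in_itv. Qed.

Lemma idx_lt y : (index y (enum S) < #|S|)%N.
Proof. by rewrite cardE index_mem mem_enum. Qed.

Lemma Jc_bounds x w y : lo (rcons (x :: w) y) + q (rcons (x :: w) y) =
   lo (x :: w) + q (x :: w) * cum (x :: w) (index y (enum S)).+1.
Proof.
rewrite lo_rcons q_rcons cumS ?idx_lt // nth_index ?mem_enum //.
by rewrite mulrDr addrA.
Qed.

Lemma Jc_sub x w y u : u \in J (rcons (x :: w) y) -> u \in J (x :: w).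
Proof.
rewrite !inJ Jc_bounds lo_rcons => /andP [h1 h2]; apply/andP; split.
  by apply: le_trans h1; rewrite lerDl mulr_ge0 ?q_ge0 ?cum_ge0.
apply: (lt_le_trans h2); rewrite lerD2l -{2}[q (x :: w)]mulr1.
by rewrite ler_wpM2l ?q_ge0 ?cum_le1.
Qed.

Lemma Jc_disj x w y y' u : u \in J (rcons (x :: w) y) -> u \in J (rcons (x :: w) y') -> y = y'.
Proof.
have key : forall z z', (index z (enum S) < index z' (enum S))%N ->
    u \in J (rcons (x :: w) z) -> u \in J (rcons (x :: w) z') -> False.
  move=> z z' hzz; rewrite !inJ !Jc_bounds !lo_rcons => /andP [_ h2] /andP [h3 _].
  have := le_lt_trans h3 h2; rewrite ltrD2l ltNge => /negP; apply.
  by rewrite ler_wpM2l ?q_ge0 //; apply: cum_mono.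
move=> h h'; case: (ltngtP (index y (enum S)) (index y' (enum S))) => hc.
- by case: (key _ _ hc h h').
- by case: (key _ _ hc h' h).
- by rewrite -(nth_index s0 (mem_enum _ y)) hc nth_index ?mem_enum.
Qed.

Lemma Jc_cover x w u : u \in J (x :: w) -> exists y, u \in J (rcons (x :: w) y).
Proof.
rewrite inJ => /andP [h1 h2].
pose g k := lo (x :: w) + q (x :: w) * cum (x :: w) k.
have [k [hk hg]] : exists k, (k < #|S|)%N /\ g k <= u < g k.+1.
  apply: disc_ivt; first by rewrite /g cum0 mulr0 addr0.
  by rewrite /g cum_over // step_sum mulr1.
exists (nth s0 (enum S) k).
have hidx : index (nth s0 (enum S) k) (enum S) = k.
  by rewrite index_uniq ?enum_uniq // -cardE.
by rewrite inJ Jc_bounds lo_rcons hidx.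
Qed.

Definition choice (w : seq S) (u : R) : S :=
  if [pick y | u \in J (rcons w y)] is Some y then y else s0.

Lemma choiceP x w u y : u \in J (x :: w) ->
  (u \in J (rcons (x :: w) y)) <-> choice (x :: w) u = y.
Proof.
move=> hu; rewrite /choice; case: pickP => [z hz|h0].
  by split => [hy|<- //]; apply: Jc_disj hz hy.
by have [z hz] := Jc_cover hu; move: (h0 z); rewrite hz.
Qed.

Fixpoint pre (u : R) (n : nat) : seq S :=
  if n is n'.+1 then rcons (pre u n') (choice (pre u n') u) else [:: s0].
Definition fp (u : R) : ipath S := fun n => last s0 (pre u n).

Lemma size_pre u n : size (pre u n) = n.+1.
Proof. by elim: n => //= n IH; rewrite size_rcons IH. Qed.

Lemma nth_pre u n i : (i <= n)%N -> nth s0 (pre u n) i = fp u i.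
Proof.
elim: n => [|n IH]; first by rewrite leqn0 => /eqP ->.
rewrite leq_eqVlt => /orP [/eqP ->|hi].
  by rewrite /fp (last_nth s0) size_pre.
by rewrite /= nth_rcons size_pre hi IH.
Qed.

Lemma Jsub01 w u : w != [::] -> u \in J w -> 0 <= u < 1.
Proof.
elim/last_ind: w => [//|w y IH] _.
case: w IH => [|x w] IH.
  rewrite inJ q1 lo1 add0r => /andP [-> h] /=.
  by apply: (lt_le_trans h); case: (y == s0).
by move=> /Jc_sub; apply: IH.
Qed.

Lemma preJ u n w : size w = n.+1 -> 0 <= u < 1 -> (pre u n = w <-> u \in J w).
Proof.
move=> hs hu; elim: n w hs => [|n IH] w hs.
  case: w hs => [|x [|//]] // _; rewrite inJ q1 lo1 add0r /=.
  case: (eqVneq x s0) => [->|hx] /=; first by rewrite hu.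
  split; first by case=> /esym/eqP; rewrite (negbTE hx).
  by move=> /andP [h1 h2]; move: (le_lt_trans h1 h2); rewrite ltxx.
case/lastP: w hs => [//|w0 y]; rewrite size_rcons => /eqP; rewrite eqSS => /eqP hs.
case: w0 hs IH => [//|x w] hs IH.
split.
  move=> /eqP; rewrite eqseq_rcons => /andP [/eqP hp /eqP hc].
  have hJ : u \in J (x :: w) by apply/(IH _ hs).
  by apply/(choiceP _ hJ); rewrite -hp.
move=> hJc; have hJ := Jc_sub hJc.
have hp : pre u n = x :: w by apply/(IH _ hs).
by rewrite /= hp; congr rcons; apply/(choiceP _ hJ).
Qed.

Lemma Cyl_fp u n w : size w = n.+1 -> (Cyl w (fp u) <-> pre u n = w).
Proof.
move=> hs; split.
  move=> hc; apply: (@eq_from_nth _ s0); first by rewrite size_pre hs.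
  move=> i; rewrite size_pre => hi; rewrite nth_pre // hc ?hs //.
  by apply: set_nth_default; rewrite hs.
move=> hp i hi; rewrite -(@nth_pre u n i); last by rewrite -ltnS -hs.
by rewrite hp; apply: set_nth_default.
Qed.

Definition D01 : set R := [set` `[0%R, 1%R[].

Lemma Cyl_pre x w : fp @^-1` (Cyl (x :: w)) `&` D01 = [set` J (x :: w)].
Proof.
have hs : size (x :: w) = (size w).+1 by [].
apply/seteqP; split => u /=.
  move=> [hc hu]; rewrite /D01 /= in_itv /= in hu.
  by apply: (proj1 (preJ hs hu)); apply: (proj1 (Cyl_fp u hs)).
move=> hJ; have hu := @Jsub01 (x :: w) u isT hJ; split; last by rewrite /D01 /= in_itv.
by apply: (proj2 (Cyl_fp u hs)); apply: (proj2 (preJ hs hu)).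
Qed.

Lemma lebJw x w : lebesgue_measure [set` J (x :: w)] = (q (x :: w))%:E.
Proof. by rewrite /J lebJ ?lerDl ?q_ge0 // addrC addKr. Qed.

Definition PP (B : set (ipath S)) : R := fine (lebesgue_measure (fp @^-1` B `&` D01)).

Lemma PP_cyl x w : PP (Cyl (x :: w)) = q (x :: w).
Proof. by rewrite /PP Cyl_pre lebJw. Qed.

Lemma D01_meas : measurable D01. Proof. exact: measurable_itv. Qed.

Lemma pre_meas B : cyl_measurable B -> measurable (fp @^-1` B `&` D01).
Proof.
move=> hB.
pose G := [set B | measurable (fp @^-1` B `&` D01)].
have sG : sigma_algebra setT G.
  split.
  - by rewrite /G /= preimage_set0 set0I.
  - move=> B' hB'; rewrite /G /=.
    have -> : fp @^-1` (setT `\` B') `&` D01 = D01 `\` (fp @^-1` B' `&` D01).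
      apply/seteqP; split => u /=; first by move=> [[_ h1] h2]; split => // -[].
      by move=> [h2 h1]; split => //; split => // h; apply: h1.
    by apply: measurableD => //; apply: D01_meas.
  - move=> F hF; rewrite /G /= preimage_bigcup setI_bigcupl.
    by apply: bigcup_measurable => k _; apply: hF.
have cG : @cylinders S `<=` G.
  by move=> C [x [w ->]]; rewrite /G /= Cyl_pre; apply: measurable_itv.
exact: (smallest_sub sG cG hB).
Qed.

Lemma leb_fin B : cyl_measurable B -> lebesgue_measure (fp @^-1` B `&` D01) \is a fin_num.
Proof.
move=> hB; rewrite ge0_fin_numE ?measure_ge0 //.
apply: (le_lt_trans (y := lebesgue_measure D01)).
  by apply: le_measure => //; rewrite inE; [apply: pre_meas | apply: D01_meas].
by rewrite /D01 lebJ // subr0 ltry.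
Qed.

Lemma PP_prob : prob_measure PP.
Proof.
split.
- by move=> B hB; rewrite /PP fine_ge0 // measure_ge0.
- by rewrite /PP preimage_set0 set0I measure0.
- by rewrite /PP preimage_setT setTI /D01 lebJ // subr0.
- move=> F hF htriv.
  have mE : forall n, measurable (fp @^-1` F n `&` D01) by move=> n; apply: pre_meas.
  have tE : trivIset setT (fun n => fp @^-1` F n `&` D01).
    move=> i j _ _ [u [[h1 _] [h2 _]]]; apply: htriv => //; by exists (fp u).
  have h := @measure_sigma_additive _ _ _ (@lebesgue_measure R) _ mE tE.
  have hU : cyl_measurable (\bigcup_n F n).
    by case: (smallest_sigma_algebra setT (@cylinders S)) => _ _; apply.
  have h2 : (fun n => \sum_(0 <= i < n) lebesgue_measure (fp @^-1` F i `&` D01)) @ \oo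
      --> ((PP (\bigcup_n F n))%:E : \bar R).
    rewrite /PP fineK ?(leb_fin hU) // preimage_bigcup setI_bigcupl; exact: h.
  have -> : (fun n => \sum_(0 <= i < n) PP (F i)) =
     (fine \o (fun n => \sum_(0 <= i < n) lebesgue_measure (fp @^-1` F i `&` D01))).
    apply: funext => n /=; rewrite /PP sum_fine //.
    by move=> i _; apply: leb_fin.
  exact: (fine_cvg h2).
Qed.

Lemma PP_isPr : is_Pr s0 sig pi PP.
Proof.
split.
- exact: PP_prob.
- by move=> s'; rewrite PP_cyl q1; case: (s' == s0).
- by move=> x w s'; rewrite !PP_cyl q_rcons.
Qed.

End Exist.

Lemma exists_Pr (R : realType) (S A : finType) (I : S -> A -> S -> interval R)
  (s0 : S) sig pi : scheduler sig -> nature I pi -> exists P, is_Pr s0 sig pi P.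
Proof. by move=> hs hp; exists (PP s0 sig pi); exact: (PP_isPr s0 hs hp). Qed.

Section Cyl.
Variable S : finType.

Lemma cm_set0 : @cyl_measurable S set0.
Proof. by case: (smallest_sigma_algebra setT (@cylinders S)). Qed.

Lemma cm_bigcup (F : nat -> set (ipath S)) :
  (forall n, cyl_measurable (F n)) -> cyl_measurable (\bigcup_n F n).
Proof. by case: (smallest_sigma_algebra setT (@cylinders S)) => _ _; apply. Qed.

Lemma cm_setU (A B : set (ipath S)) : cyl_measurable A -> cyl_measurable B ->
  cyl_measurable (A `|` B).
Proof.
move=> hA hB.
have -> : A `|` B = \bigcup_n (if n is 0%N then A else B).
  apply/seteqP; split => om /=.
    by case=> h; [exists 0%N | exists 1%N].
  by case=> -[|n] _ h; [left | right].
by apply: cm_bigcup => -[].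
Qed.

Lemma cm_cyl x w : cyl_measurable (@Cyl S (x :: w)).
Proof. by apply: sub_gen_smallest; exists x, w. Qed.

Lemma Cyl_disj (w w' : seq S) : size w = size w' -> w != w' -> Cyl w `&` Cyl w' = set0.
Proof.
move=> hs hne; apply/seteqP; split => // om [h1 h2]; apply: (negP hne); apply/eqP.
apply: (@eq_from_nth _ (om 0%N)) => // i hi.
have e1 : nth (om 0%N) w i = om i by rewrite (set_nth_default (om i)) // -h1.
have hi' : (i < size w')%N by rewrite -hs.
have e2 : nth (om 0%N) w' i = om i by rewrite (set_nth_default (om i)) // -h2.
by rewrite e1 e2.
Qed.

Fixpoint paths (n : nat) : seq (seq S) :=
  if n is n'.+1 then [seq rcons w y | w <- paths n', y <- enum S] else [:: [::]].

Lemma mem_paths n w : (w \in paths n) = (size w == n).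
Proof.
elim: n w => [|n IH] w; first by case: w.
apply/idP/idP.
  by case/allpairsP => -[w0 y] /= [h0 _ ->]; rewrite size_rcons eqSS -IH.
case/lastP: w => [//|w0 y]; rewrite size_rcons eqSS => h.
by apply/allpairsP; exists (w0, y); rewrite /= IH h mem_enum.
Qed.

Lemma uniq_paths n : uniq (paths n).
Proof.
elim: n => [//|n IH] /=; apply: allpairs_uniq => //; first exact: enum_uniq.
by move=> [a b] [c d] _ _ /= /eqP; rewrite eqseq_rcons => /andP [/eqP -> /eqP ->].
Qed.

Definition pref (om : ipath S) (n : nat) : seq S := mkseq om n.+1.

Lemma Cyl_pref (w : seq S) n om : size w = n.+1 -> (Cyl w om <-> pref om n = w).
Proof.
move=> hs; split.
  move=> hc; apply: (@eq_from_nth _ (om 0%N)); first by rewrite size_mkseq hs.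
  move=> i; rewrite size_mkseq => hi; rewrite nth_mkseq // hc ?hs //.
  by apply: set_nth_default; rewrite hs.
move=> <- i hi; rewrite nth_mkseq //; by rewrite size_mkseq in hi.
Qed.

Definition Useq (l : seq (seq S)) : set (ipath S) := [set om | exists2 w, w \in l & Cyl w om].

Lemma Useq_nil : Useq [::] = set0.
Proof. by apply/seteqP; split => om // -[]. Qed.

Lemma Useq_cons w l : Useq (w :: l) = Cyl w `|` Useq l.
Proof.
apply/seteqP; split => om /=.
  by case=> w'; rewrite inE => /orP [/eqP -> h|h1 h2]; [left|right; exists w'].
by case=> [h|[w' h1 h2]]; [exists w; rewrite ?mem_head | exists w'; rewrite // inE h1 orbT].
Qed.

Lemma cm_Useq l : (forall w, w \in l -> w != [::]) -> cyl_measurable (Useq l).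
Proof.
elim: l => [|w l IH] hl; first by rewrite Useq_nil; apply: cm_set0.
rewrite Useq_cons; apply: cm_setU; last by apply: IH => w' h; apply: hl; rewrite inE h orbT.
by case: w hl => [|x w] hl; [move: (hl _ (mem_head _ _)) | apply: cm_cyl].
Qed.

Definition pev (n : nat) (D : pred (seq S)) : set (ipath S) := [set om | D (pref om n)].

Lemma pev_Useq n D : pev n D = Useq [seq w <- paths n.+1 | D w].
Proof.
apply/seteqP; split => om.
  move=> hD; exists (pref om n); first by rewrite mem_filter mem_paths size_mkseq eqxx andbT; exact: hD.
  by apply/(Cyl_pref _ (size_mkseq _ _)).
move=> [w]; rewrite mem_filter mem_paths => /andP [hD /eqP hs] hc.
by rewrite /pev /=; move/(Cyl_pref _ hs): hc => ->.
Qed.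

Lemma cm_pev n D : cyl_measurable (pev n D).
Proof.
rewrite pev_Useq; apply: cm_Useq => w; rewrite mem_filter mem_paths => /andP [_ /eqP h].
by apply/eqP => h0; rewrite h0 in h.
Qed.

End Cyl.

Section Gen.
Variables (R : realType) (S : finType) (P : set (ipath S) -> R).
Hypothesis HP : prob_measure P.

Lemma P_ge0 B : cyl_measurable B -> 0 <= P B.
Proof. by case: HP => h _ _ _; apply: h. Qed.

Lemma P_add2 A B : cyl_measurable A -> cyl_measurable B -> A `&` B = set0 ->
  P (A `|` B) = P A + P B.
Proof.
move=> hA hB hAB; case: HP => _ h0 _ hs.
pose F n := if n is 0%N then A else if n is 1%N then B else set0.
have mF : forall n, cyl_measurable (F n) by case=> [|[|n]] //; apply: cm_set0.
have tF : trivIset setT F.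
  move=> i j _ _ [om [hi hj]].
  have hAB' : ~ (A om /\ B om) by move=> [a b]; have : (A `&` B) om by []; rewrite hAB.
  case: i hi => [|[|i]] hi; case: j hj => [|[|j]] hj //; try by case: hi; try by case: hj.
  + by exfalso; apply: hAB'.
  + by exfalso; apply: hAB'.
have hU : \bigcup_n F n = A `|` B.
  apply/seteqP; split => om /=.
    by case=> [[|[|n]]] _ //= h; [left|right].
  by case=> h; [exists 0%N | exists 1%N].
have h1 := hs F mF tF; rewrite hU in h1.
have h2 : (fun n => \sum_(0 <= i < n) P (F i)) @ \oo --> P A + P B.
  rewrite -(cvg_shiftn 2).
  have -> : (fun n => \sum_(0 <= i < n + 2) P (F i)) = (fun=> P A + P B).
    apply: funext => n; rewrite addn2 big_ltn // big_ltn //= addrA.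
    rewrite big_nat_cond big1 ?addr0 // => -[|[|i]] //= _; exact: h0.
  exact: cvg_cst.
exact: (cvg_unique (@Rhausdorff R) h1 h2).
Qed.

Lemma P_Useq n (l : seq (seq S)) : (forall w, w \in l -> size w = n.+1) -> uniq l ->
  P (Useq l) = \sum_(w <- l) P (Cyl w).
Proof.
elim: l => [|w l IH] hl hu.
  by rewrite Useq_nil big_nil; case: HP.
move: hu => /= /andP [hw hu].
have hl' : forall w', w' \in l -> size w' = n.+1 by move=> w' h; apply: hl; rewrite inE h orbT.
have hw1 := hl _ (mem_head _ _).
rewrite Useq_cons P_add2 ?big_cons ?IH //.
- by case: w hw1 {hl hw} => // x w _; apply: cm_cyl.
- apply: cm_Useq => w' /hl' h; apply/eqP => h0; by rewrite h0 in h.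
- apply/seteqP; split => // om [h1 [w' h2 h3]].
  have hne : w != w' by apply/eqP => e; rewrite e h2 in hw.
  have : (Cyl w `&` Cyl w') om by [].
  by rewrite Cyl_disj // hw1 hl'.
Qed.

Lemma P_pev n D : P (pev n D) = \sum_(w <- paths S n.+1 | D w) P (Cyl w).
Proof.
rewrite pev_Useq (@P_Useq n) ?big_filter //.
  by move=> w; rewrite mem_filter mem_paths => /andP [_ /eqP].
by apply: filter_uniq; apply: uniq_paths.
Qed.

End Gen.

Section Conv.
Variable R : realType.

Lemma sum_seq_pos (T : Type) (r : seq T) (p : pred T) (w f : T -> R) :
  (forall j, p j -> 0 <= w j) -> (forall j, p j -> 0 < f j) ->
  0 < \sum_(j <- r | p j) w j -> 0 < \sum_(j <- r | p j) w j * f j.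
Proof.
move=> hw hf; elim: r => [|x r IH]; first by rewrite big_nil ltxx.
rewrite !big_cons; case: ifP => hp; last exact: IH.
have hr : 0 <= \sum_(j <- r | p j) w j * f j.
  by apply: sumr_ge0 => j hj; apply: mulr_ge0; [apply: hw | apply: ltW; apply: hf].
have hr' : 0 <= \sum_(j <- r | p j) w j by apply: sumr_ge0.
have hwx := hw x hp; have hfx := hf x hp.
case: (ltrP 0 (\sum_(j <- r | p j) w j)) => hs h.
  by have := IH hs; have := mulr_ge0 hwx (ltW hfx); lra.
have hwx' : 0 < w x by lra.
by have := mulr_gt0 hwx' hfx; lra.
Qed.

Lemma sum_seq_eq0 (T : eqType) (r : seq T) (p : pred T) (F : T -> R) :
  (forall j, p j -> 0 <= F j) -> \sum_(j <- r | p j) F j = 0 ->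
  forall j, j \in r -> p j -> F j = 0.
Proof.
move=> hF; elim: r => [|y r IH]; first by [].
rewrite big_cons => hsum j; rewrite inE => /orP [/eqP ->|hj] hp.
  move: hsum; rewrite hp => /eqP; rewrite paddr_eq0 ?hF //; last by apply: sumr_ge0.
  by case/andP => /eqP.
case: ifP hsum => hy hsum; last by apply: IH.
move: hsum => /eqP; rewrite paddr_eq0 ?hF //; last by apply: sumr_ge0.
by case/andP => _ /eqP h; apply: IH.
Qed.

Section ItvConv.
Variables (T : Type) (r : seq T) (p : pred T) (w x : T -> R).
Hypotheses (hw : forall j, p j -> 0 <= w j) (hs : \sum_(j <- r | p j) w j = 1).

Lemma cv_cl_lo a : (forall j, p j -> a <= x j) -> a <= \sum_(j <- r | p j) w j * x j.
Proof.
move=> h; rewrite -[a]mul1r -hs mulr_suml; apply: ler_sum => j hj.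
by apply: ler_wpM2l; [apply: hw | apply: h].
Qed.

Lemma cv_cl_hi a : (forall j, p j -> x j <= a) -> \sum_(j <- r | p j) w j * x j <= a.
Proof.
move=> h; rewrite -[a]mul1r -hs mulr_suml; apply: ler_sum => j hj.
by apply: ler_wpM2l; [apply: hw | apply: h].
Qed.

Lemma cv_op_lo a : (forall j, p j -> a < x j) -> a < \sum_(j <- r | p j) w j * x j.
Proof.
move=> h; rewrite -subr_gt0.
have -> : \sum_(j <- r | p j) w j * x j - a = \sum_(j <- r | p j) w j * (x j - a).
  rewrite [RHS](eq_bigr (fun j => w j * x j - w j * a)) => [|j _]; last by rewrite mulrBr.
  by rewrite sumrB -mulr_suml hs mul1r.
apply: sum_seq_pos => // [j hj|]; [by rewrite subr_gt0; apply: h | by rewrite hs ltr01].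
Qed.

Lemma cv_op_hi a : (forall j, p j -> x j < a) -> \sum_(j <- r | p j) w j * x j < a.
Proof.
move=> h; rewrite -subr_gt0.
have -> : a - \sum_(j <- r | p j) w j * x j = \sum_(j <- r | p j) w j * (a - x j).
  rewrite [RHS](eq_bigr (fun j => w j * a - w j * x j)) => [|j _]; last by rewrite mulrBr.
  by rewrite sumrB -mulr_suml hs mul1r.
apply: sum_seq_pos => // [j hj|]; [by rewrite subr_gt0; apply: h | by rewrite hs ltr01].
Qed.

Lemma cv_none : (forall j, p j -> false) -> False.
Proof.
move=> h; move: hs; rewrite big_pred0 => [/esym/eqP|j]; first by rewrite oner_eq0.
by apply/idP => /h.
Qed.

Lemma itv_conv (i : interval R) : (forall j, p j -> x j \in i) ->
  \sum_(j <- r | p j) w j * x j \in i.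
Proof.
case: i => l u hx; rewrite itv_boundlr.
have hx' : forall j, p j -> (l <= BLeft (x j))%O && (BRight (x j) <= u)%O.
  by move=> j /hx; rewrite itv_boundlr.
case: l hx hx' => [[] a|[]]; case: u => [[] b|[]] => hx hx'; rewrite /= ?bnd_simp;
  try (exfalso; apply: cv_none => j /hx'; rewrite /= ?bnd_simp //; by case/andP);
  try (apply/andP; split);
  first [ apply: cv_cl_lo | apply: cv_op_lo | apply: cv_cl_hi | apply: cv_op_hi | by [] ];
  move=> j /hx'; rewrite /= ?bnd_simp; try (by case/andP); by [].
Qed.

End ItvConv.
End Conv.

Lemma paths_S (S : finType) n : paths S n.+1 = [seq rcons w y | w <- paths S n, y <- enum S].
Proof. by []. Qed.
Lemma paths_0 (S : finType) : paths S 0 = [:: [::]].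
Proof. by []. Qed.

Lemma cm_Cyl (S : finType) (t : seq S) : cyl_measurable (Cyl t).
Proof.
case: t => [|x w]; last exact: cm_cyl.
have -> : Cyl [::] = setT `\` set0 :> set (ipath S).
  by apply/seteqP; split => om //= _; split.
by case: (smallest_sigma_algebra setT (@cylinders S)) => h0 hc _; apply: hc.
Qed.

Section Cls.
Variables (R : realType) (S A : finType) (I : S -> A -> S -> interval R) (Rel : rel S).
Hypothesis Req : Defs.equivalence_rel Rel.

Lemma Rrefl x : Rel x x. Proof. by case: Req. Qed.
Lemma Rsym x y : Rel x y -> Rel y x. Proof. by case: Req => _ hs _; rewrite hs. Qed.
Lemma Rtrans x y z : Rel x y -> Rel y z -> Rel x z.
Proof. by case: Req => _ _ ht; apply: ht. Qed.

Definition rep (x : S) : S := if [pick y | Rel x y] is Some y then y else x.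

Lemma Rel_rep x : Rel x (rep x).
Proof. by rewrite /rep; case: pickP => // _; apply: Rrefl. Qed.

Lemma rep_eq x y : Rel x y -> rep x = rep y.
Proof.
move=> h; rewrite /rep (@eq_pick _ _ (fun z => Rel y z)).
  by case: pickP => // hn; move: (hn y); rewrite Rrefl.
move=> z /=; apply/idP/idP => hz; first by apply: Rtrans (Rsym h) hz.
by apply: Rtrans h hz.
Qed.

Lemma rep_Rel x y : rep x = rep y -> Rel x y.
Proof. by move=> e; apply: Rtrans (Rel_rep x) _; rewrite e; apply: Rsym; apply: Rel_rep. Qed.

Definition massr (mu : S -> R) (c : S) : R := \sum_(y | rep y == c) mu y.

Lemma massr_eq mu nu : (forall c, mass_class Rel mu c = mass_class Rel nu c) ->
  forall c, massr mu c = massr nu c.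
Proof.
move=> h c; case: (pickP (fun z => rep z == c)) => [z /eqP hz|hn].
  have E : forall f, massr f c = mass_class Rel f z.
    move=> f; rewrite /massr /mass_class; apply: eq_bigl => y; rewrite -hz.
    apply/idP/idP => [/eqP e|hzy]; first by apply: rep_Rel; rewrite e.
    by apply/eqP; rewrite (rep_eq hzy).
  by rewrite !E.
by rewrite /massr !big_pred0.
Qed.

Lemma Gamma_conv (T : Type) (r : seq T) (p : pred T) (w : T -> R) (m : T -> S -> R) y a :
  (forall j, p j -> 0 <= w j) -> \sum_(j <- r | p j) w j = 1 ->
  (forall j, p j -> Gamma I y a (m j)) ->
  Gamma I y a (fun z => \sum_(j <- r | p j) w j * m j z).
Proof.
move=> hw hs hm; split; first split.
- move=> z; apply: sumr_ge0 => j hj; apply: mulr_ge0 (hw j hj) _.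
  by case: (hm j hj) => [[h _] _].
- rewrite exchange_big /= -hs; apply: eq_bigr => j hj; rewrite -mulr_sumr.
  by case: (hm j hj) => [[_ ->] _]; rewrite mulr1.
- move=> z; apply: itv_conv => // j hj; by case: (hm j hj) => _; apply.
Qed.

Lemma bev (F : A -> R) : \sum_(i < #|A|) F (enum_val i) = \sum_a F a.
Proof. by rewrite -big_enum_val; apply: eq_bigl => a; rewrite inE. Qed.

Lemma sched_ctrans y (s0 : A -> R) (p0 : A -> S -> R) : is_dist s0 ->
  (forall a, Gamma I y a (p0 a)) -> ctrans I y (fun z => \sum_a s0 a * p0 a z).
Proof.
move=> [h0 h1] hg.
exists #|A|, (fun i => s0 (enum_val i)), (fun i => enum_val i), (fun i => p0 (enum_val i)).
split => //; first by rewrite bev.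
by move=> z; rewrite (bev (fun a => s0 a * p0 a z)).
Qed.

Lemma ctrans_sched (g : S -> A -> S -> R) (hg : forall s a, Gamma I s a (g s a)) y mu :
  ctrans I y mu -> exists s0 p0, [/\ is_dist s0, forall a, Gamma I y a (p0 a) &
     forall z, mu z = \sum_a s0 a * p0 a z].
Proof.
case=> n [lam [act [nus [hl hs hG hmu]]]].
pose s0 a := \sum_(i | act i == a) lam i.
have s0ge : forall a, 0 <= s0 a by move=> a; apply: sumr_ge0.
have split_sum : forall F : 'I_n -> R, \sum_i F i = \sum_a \sum_(i | act i == a) F i.
  by move=> F; rewrite (partition_big act predT) //.
pose p0 a := if s0 a == 0 then g y a else (fun z => \sum_(i | act i == a) (lam i / s0 a) * nus i z).
exists s0, p0; split.
- by split => //; rewrite /s0 -split_sum.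
- move=> a; rewrite /p0; case: eqP => h; first exact: hg.
  apply: Gamma_conv.
  + by move=> i _; apply: divr_ge0.
  + by rewrite -mulr_suml divff //; apply/eqP.
  + by move=> i /eqP <-.
- move=> z; rewrite hmu split_sum; apply: eq_bigr => a _; rewrite /p0; case: eqP => h.
  + rewrite h mul0r; apply: big1 => i hi.
    by rewrite (psumr_eq0P (fun i _ => hl i) h hi) mul0r.
  + rewrite mulr_sumr; apply: eq_bigr => i _.
    by rewrite mulrA mulrCA mulfV ?mulr1 //; apply/eqP.
Qed.

Definition Q (P : set (ipath S) -> R) (H : seq S) : R :=
  \sum_(t <- paths S (size H) | map rep t == H) P (Cyl t).

Lemma Q_ge0 P H : prob_measure P -> 0 <= Q P H.
Proof. by move=> hP; apply: sumr_ge0 => t _; apply: P_ge0 => //; apply: cm_Cyl. Qed.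

Lemma Q_rcons (u0 : S) (sig : seq S -> A -> R) (pi : seq S -> A -> S -> R) P H0 c : is_Pr u0 sig pi P -> H0 != [::] ->
  Q P (rcons H0 c) =
  \sum_(t <- paths S (size H0) | map rep t == H0) P (Cyl t) * massr (step sig pi t) c.
Proof.
move=> [hP _ hrec] hne.
rewrite /Q size_rcons paths_S big_mkcond big_allpairs_dep /= [RHS]big_mkcond.
rewrite big_seq [RHS]big_seq; apply: eq_bigr => t; rewrite mem_paths => /eqP hst.
rewrite (eq_bigr (fun y => if (map rep t == H0) && (rep y == c) then P (Cyl (rcons t y)) else 0));
  last by move=> y _; rewrite map_rcons eqseq_rcons.
case: (map rep t =P H0) => ht; last by rewrite big1.
have [x [w et]] : exists x w, t = x :: w.
  by case: t hst {ht} => [|x w]; [move=> h; move: hne; rewrite -size_eq0 -h | exists x, w].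
rewrite et /massr mulr_sumr big_enum /= big_mkcond [RHS]big_mkcond.
apply: eq_bigr => y _ /=.
by case: (rep y == c) => //; exact: hrec.
Qed.

Lemma Q1 (u0 : S) (sig : seq S -> A -> R) (pi : seq S -> A -> S -> R) P c : is_Pr u0 sig pi P -> Q P [:: c] = (rep u0 == c)%:R.
Proof.
move=> [_ h1 _]; rewrite /Q [size _]/= paths_S paths_0 big_mkcond big_allpairs_dep big_seq1 /=.
rewrite big_enum /= (bigD1 u0) //= big1 ?addr0 => [|y hy].
  by rewrite h1 eqxx eqseq_cons andbT; case: (rep u0 == c).
by rewrite h1 (negbTE hy); case: ifP.
Qed.

End Cls.

Section Match.
Variables (R : realType) (S A AP : finType) (L : S -> {set AP}) (I : S -> A -> S -> interval R).
Variable Rel : rel S.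
Hypothesis HRel : forall_bisimulation L I Rel.
Let Req : Defs.equivalence_rel Rel := HRel.1.
Variable g : S -> A -> S -> R.
Hypothesis hg : forall s a, Gamma I s a (g s a).
Variable a0 : A.
Variables (v u : S).
Hypothesis Hvu : Rel v u.
Variables (sig' : seq S -> A -> R) (pi' : seq S -> A -> S -> R) (P' : set (ipath S) -> R).
Hypotheses (Hs' : scheduler sig') (Hn' : nature I pi') (HP' : is_Pr v sig' pi' P').

Local Notation rp := (rep Rel).
Local Notation mr := (massr Rel).
Local Notation QQ := (Q Rel).

Definition comb (p : (A -> R) * (A -> S -> R)) (z : S) : R := \sum_a p.1 a * p.2 a z.

Definition spec x y (nu : S -> R) (p : (A -> R) * (A -> S -> R)) : Prop :=
  [/\ is_dist p.1, (forall a, Gamma I y a (p.2 a)) &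
      (Rel x y -> ctrans I x nu -> forall c, mr (comb p) c = mr nu c)].

Lemma dirac_dist : is_dist (fun a : A => (a == a0)%:R : R).
Proof.
split; first by move=> a; rewrite ler0n.
by rewrite (bigD1 a0) //= eqxx big1 ?addr0 // => a /negbTE ->.
Qed.

Lemma spec_ex x y nu : exists p, spec x y nu p.
Proof.
case: (pselect (Rel x y /\ ctrans I x nu)) => [[hxy hc]|hn].
  have [_ hb] := HRel.2 x y hxy.
  have [nu2 [hc2 hm]] := hb nu hc.
  have [s0 [p0 [hd hG hmu]]] := ctrans_sched hg hc2.
  exists (s0, p0); split => // _ _ c.
  rewrite (massr_eq Req hm c); apply: eq_bigr => z _; by rewrite hmu.
exists ((fun a => (a == a0)%:R), g y); split => //; first exact: dirac_dist.
by move=> hxy hc; exfalso; apply: hn.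
Qed.

Definition cm x y nu := proj1_sig (cid (spec_ex x y nu)).
Lemma cmP x y nu : spec x y nu (cm x y nu). Proof. exact: (proj2_sig (cid _)). Qed.

Definition wq (h : seq S) : R := QQ P' (map rp h).
Definition cmt (t h : seq S) := cm (last v t) (last u h) (step sig' pi' t).
Definition sel (h t : seq S) : bool := map rp t == map rp h.
Definition usig (h : seq S) (a : A) : R :=
  if wq h == 0 then (a == a0)%:R
  else \sum_(t <- paths S (size h) | sel h t) P' (Cyl t) / wq h * (cmt t h).1 a.
Definition upi (h : seq S) (a : A) : S -> R :=
  if (wq h == 0) || (usig h a == 0) then g (last u h) a
  else (fun y => (\sum_(t <- paths S (size h) | sel h t)
                    P' (Cyl t) / wq h * (cmt t h).1 a * (cmt t h).2 a y) / usig h a).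

Lemma HP'p : prob_measure P'. Proof. by case: HP'. Qed.
Lemma P'_ge0 t : 0 <= P' (Cyl t). Proof. exact: (P_ge0 HP'p (cm_Cyl t)). Qed.
Lemma wq_ge0 h : 0 <= wq h. Proof. exact: (Q_ge0 _ _ HP'p). Qed.
Lemma wq_sum h : \sum_(t <- paths S (size h) | sel h t) P' (Cyl t) = wq h.
Proof. by rewrite /wq /Q size_map. Qed.
Lemma cmt_dist t h : is_dist (cmt t h).1. Proof. by case: (cmP (last v t) (last u h) (step sig' pi' t)). Qed.
Lemma cmt_G t h a : Gamma I (last u h) a ((cmt t h).2 a).
Proof. by case: (cmP (last v t) (last u h) (step sig' pi' t)) => _ h2 _; apply: h2. Qed.
Lemma wt_ge0 t h a : 0 <= P' (Cyl t) / wq h * (cmt t h).1 a.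
Proof.
apply: mulr_ge0; first by apply: divr_ge0; [apply: P'_ge0 | apply: wq_ge0].
by case: (cmt_dist t h) => h0 _; apply: h0.
Qed.

Lemma msig_ge0 h a : 0 <= usig h a.
Proof.
rewrite /usig; case: ifP => _; first by rewrite ler0n.
by apply: sumr_ge0 => t _; apply: wt_ge0.
Qed.

Lemma msig_sum h : \sum_a usig h a = 1.
Proof.
rewrite /usig; case: (eqVneq (wq h) 0) => hw.
  by case: dirac_dist.
rewrite exchange_big /= (eq_bigr (fun t => P' (Cyl t) / wq h)).
  by rewrite -mulr_suml wq_sum divff.
move=> t _; rewrite -mulr_sumr; by case: (cmt_dist t h) => _ ->; rewrite mulr1.
Qed.

Lemma msched : scheduler usig.
Proof. by move=> x w; split; [apply: msig_ge0 | apply: msig_sum]. Qed.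

Lemma mnature : nature I upi.
Proof.
move=> x w a; rewrite /upi; case: ifP => h; first exact: hg.
move/norP: h => [hw hs].
have -> : (fun y => (\sum_(t <- paths S (size (x :: w)) | sel (x :: w) t)
      P' (Cyl t) / wq (x :: w) * (cmt t (x :: w)).1 a * (cmt t (x :: w)).2 a y) / usig (x :: w) a)
  = (fun y => \sum_(t <- paths S (size (x :: w)) | sel (x :: w) t)
      (P' (Cyl t) / wq (x :: w) * (cmt t (x :: w)).1 a / usig (x :: w) a) * (cmt t (x :: w)).2 a y).
  apply: funext => y; rewrite mulr_suml; apply: eq_bigr => t _; by rewrite mulrAC.
apply: Gamma_conv.
- by move=> t _; apply: divr_ge0; [apply: wt_ge0 | apply: msig_ge0].
- rewrite -mulr_suml.
  have -> : \sum_(t <- paths S (size (x :: w)) | sel (x :: w) t)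
      P' (Cyl t) / wq (x :: w) * (cmt t (x :: w)).1 a = usig (x :: w) a.
    by rewrite /usig (negbTE hw).
  by rewrite divff.
- by move=> t _; apply: (cmt_G t (x :: w)).
Qed.

Lemma key_m h a y : wq h != 0 ->
  usig h a * upi h a y = \sum_(t <- paths S (size h) | sel h t)
      P' (Cyl t) / wq h * (cmt t h).1 a * (cmt t h).2 a y.
Proof.
move=> hw; rewrite /upi (negbTE hw) /=; case: eqP => hs.
  rewrite hs mul0r; symmetry; rewrite big_seq_cond; apply: big1 => t /andP [ht hsel].
  have hs' := hs; rewrite /usig (negbTE hw) in hs'.
  by rewrite (sum_seq_eq0 (fun t _ => wt_ge0 t h a) hs' ht hsel) mul0r.
by rewrite mulrC divfK //; apply/eqP.
Qed.

Lemma step_m h c : h != [::] -> wq h != 0 ->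
  mr (step usig upi h) c = QQ P' (rcons (map rp h) c) / wq h.
Proof.
move=> hne hw.
rewrite /massr (eq_bigr (fun y => \sum_(t <- paths S (size h) | sel h t)
    P' (Cyl t) / wq h * comb (cmt t h) y)); last first.
  move=> y _; rewrite /step (eq_bigr _ (fun a _ => key_m a y hw)) exchange_big /=.
  apply: eq_bigr => t _; rewrite /comb mulr_sumr; apply: eq_bigr => a _; by rewrite mulrA.
rewrite exchange_big /= (eq_bigr (fun t => P' (Cyl t) / wq h * mr (comb (cmt t h)) c));
  last by move=> t _; rewrite /massr mulr_sumr.
rewrite big_seq_cond (eq_bigr (fun t => P' (Cyl t) * mr (step sig' pi' t) c / wq h)); last first.
  move=> t /andP [ht hsel]; rewrite mulrAC; congr (_ * _ / _).
  have [x [w et]] : exists x w, t = x :: w.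
    move: ht; rewrite mem_paths; case: t {hsel} => [|x w]; last by exists x, w.
    by rewrite eq_sym size_eq0 (negbTE hne).
  case: (cmP (last v t) (last u h) (step sig' pi' t)) => _ _; apply.
  - apply: (rep_Rel Req).
    move: hsel; rewrite /sel => /eqP hsel.
    by rewrite -(last_map rp t v) -(last_map rp h u) hsel (rep_eq Req Hvu).
  - rewrite et; apply: sched_ctrans; first exact: Hs'.
    by move=> a; apply: Hn'.
rewrite -big_seq_cond -mulr_suml.
by rewrite (Q_rcons Rel c HP') ?size_map // -size_eq0 size_map size_eq0.
Qed.

Lemma Qmatch P : is_Pr u usig upi P -> forall H, H != [::] -> QQ P H = QQ P' H.
Proof.
move=> hP; elim/last_ind => [//|H0 c IH] _.
case: (eqVneq H0 [::]) => [->|hne].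
  by rewrite /= (Q1 _ _ hP) (Q1 _ _ HP') (rep_eq Req Hvu).
have IH' := IH hne.
have hPp : prob_measure P by case: hP.
rewrite [LHS](Q_rcons _ c hP hne).
case: (eqVneq (QQ P' H0) 0) => hq.
  rewrite (Q_rcons _ c HP' hne) big_seq_cond big1 => [|t /andP [ht hsel]].
    rewrite big_seq_cond big1 // => t /andP [ht hsel].
    have := sum_seq_eq0 (fun t _ => P'_ge0 t) hq ht hsel; by move=> ->; rewrite mul0r.
  have hq' : QQ P H0 = 0 by rewrite IH'.
  have := sum_seq_eq0 (fun t _ => P_ge0 hPp (cm_Cyl t)) hq' ht hsel; by move=> ->; rewrite mul0r.
rewrite big_seq_cond (eq_bigr (fun t => P (Cyl t) * (QQ P' (rcons H0 c) / QQ P' H0))); last first.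
  move=> t /andP [ht hsel]; congr (_ * _).
  have hne' : t != [::].
    by move: ht; rewrite mem_paths => /eqP e; rewrite -size_eq0 e size_eq0.
  have hwt : wq t = QQ P' H0 by rewrite /wq (eqP hsel).
  by rewrite step_m // ?hwt // (eqP hsel).
rewrite -big_seq_cond -mulr_suml.
have -> : \sum_(t <- paths S (size H0) | map rp t == H0) P (Cyl t) = QQ P H0 by [].
by rewrite IH' mulrC divfK.
Qed.

End Match.

Scheme sform_ind2 := Induction for sform Sort Prop
  with pform_ind2 := Induction for pform Sort Prop.

Section Main.
Variables (R : realType) (S A AP : finType) (L : S -> {set AP}) (I : S -> A -> S -> interval R).
Hypothesis Hwf : imdp_wf I.
Variable Rel : rel S.
Hypothesis HRel : forall_bisimulation L I Rel.
Let Req : Defs.equivalence_rel Rel := HRel.1.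
Variable x0 : S.

Local Notation rp := (rep Rel).
Local Notation QQ := (Q Rel).

Definition gdef (s : S) (a : A) : S -> R := proj1_sig (cid (Hwf.2 s a)).
Lemma gdefP s a : Gamma I s a (gdef s a). Proof. exact: (proj2_sig (cid _)). Qed.

Lemma nthRel (w : seq S) i : Rel (nth x0 w i) (nth x0 (map rp w) i).
Proof.
case: (ltnP i (size w)) => hi; first by rewrite (nth_map x0) //; apply: Rel_rep.
by rewrite !nth_default ?size_map //; apply: Rrefl.
Qed.

Lemma Dinv (Phi : ipath S -> Prop) :
  (forall f g, (forall i, Rel (f i) (g i)) -> Phi f -> Phi g) ->
  forall w, `[< Phi (nth x0 (map rp w)) >] = `[< Phi (nth x0 w) >].
Proof.
move=> hinv w; apply: asbool_equiv_eq; split; apply: hinv => i.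
  by apply: (Rsym Req); apply: nthRel.
exact: nthRel.
Qed.

Lemma evset (Phi : ipath S -> Prop) n :
  (forall f g, (forall i, (i <= n)%N -> f i = g i) -> Phi f -> Phi g) ->
  [set om | Phi om] = pev n (fun w => `[< Phi (nth x0 w) >]).
Proof.
move=> hb; apply/seteqP; split => om h; rewrite /pev /=.
  by apply/asboolP; apply: hb h => i hi; rewrite nth_mkseq.
by move/asboolP: h; apply: hb => i hi; rewrite nth_mkseq.
Qed.

Lemma ev_Q (P : set (ipath S) -> R) n (D : pred (seq S)) : prob_measure P -> (forall w, D (map rp w) = D w) ->
  P (pev n D) = \sum_(H <- paths S n.+1 | D H) QQ P H.
Proof.
move=> hP hD; rewrite (P_pev hP).
rewrite [RHS]big_seq_cond (eq_bigr (fun H => \sum_(t <- paths S n.+1) if map rp t == H then P (Cyl t) else 0));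
  last by move=> H /andP [hH _]; rewrite /Q big_mkcond; move: hH; rewrite mem_paths => /eqP ->.
rewrite exchange_big big_mkcond big_seq [RHS]big_seq; apply: eq_bigr => t ht.
have hm : map rp t \in paths S n.+1 by move: ht; rewrite !mem_paths size_map.
rewrite big_mkcond (bigD1_seq (map rp t)) ?uniq_paths // eqxx big1 ?addr0 => [|H hH].
  by rewrite /= addr0 hm hD.
by rewrite eq_sym (negbTE hH); case: ifP.
Qed.

Lemma ev_eq (Phi : ipath S -> Prop) n (P P' : set (ipath S) -> R) : prob_measure P -> prob_measure P' ->
  (forall H, H != [::] -> QQ P H = QQ P' H) ->
  (forall f g, (forall i, Rel (f i) (g i)) -> Phi f -> Phi g) ->
  (forall f g, (forall i, (i <= n)%N -> f i = g i) -> Phi f -> Phi g) ->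
  P [set om | Phi om] = P' [set om | Phi om].
Proof.
move=> hP hP' hQ hinv hb; rewrite (evset hb) !ev_Q //; try exact: Dinv.
rewrite big_seq_cond [RHS]big_seq_cond; apply: eq_bigr => H /andP [hH _]; apply: hQ.
by move: hH; rewrite mem_paths -size_eq0 => /eqP ->.
Qed.

Lemma cvg_eq_lim (a : nat -> R) (l1 l2 : R) : a @ \oo --> l1 -> a @ \oo --> l2 -> l1 = l2.
Proof. by move=> h1 h2; apply: (cvg_unique (@Rhausdorff R) h1 h2). Qed.

Definition PF (psi : pform AP) : Prop :=
  (forall f g, (forall i, Rel (f i) (g i)) -> psat L I f psi -> psat L I g psi) /\
  (forall P P' : set (ipath S) -> R, prob_measure P -> prob_measure P' ->
     (forall H, H != [::] -> QQ P H = QQ P' H) ->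
     P [set om | psat L I om psi] = P' [set om | psat L I om psi]).

Definition SF (phi : sform AP) : Prop :=
  forall x y, Rel x y -> (sat L I x phi <-> sat L I y phi).

Lemma SF_imp phi : SF phi -> forall x y, Rel x y -> sat L I x phi -> sat L I y phi.
Proof. by move=> h x y hxy; case: (h x y hxy). Qed.

Lemma prob_dir c p psi : PF psi -> forall v u, Rel v u ->
  sat L I u (FProb c p psi) -> sat L I v (FProb c p psi).
Proof.
move=> [_ hpf] v u hvu hu sig' pi' hs' hn' P' hP' /=.
have [a0 _] : exists a0 : A, true.
  case: (pickP (fun _ : A => true)) => [a0 _|hn]; first by exists a0.
  case: (hs' v [::]) => _; rewrite big_pred0 // => /eqP; by rewrite eq_sym oner_eq0.
pose sg := usig HRel gdefP a0 v u sig' pi' P'.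
pose pg := upi HRel gdefP a0 v u sig' pi' P'.
have hsg : scheduler sg := msched HRel gdefP a0 u hP'.
have hpg : nature I pg := mnature HRel gdefP a0 u hP'.
have hPr := PP_isPr u hsg hpg.
have := hu sg pg hsg hpg _ hPr.
rewrite (hpf (PP u sg pg) P') //; first by case: hPr.
  by case: hP'.
by move=> H hH; apply: (Qmatch hvu hs' hn' hP' hPr).
Qed.

Lemma main_ind : forall phi : sform AP, SF phi.
Proof.
apply: (@sform_ind2 AP SF PF).
- by move=> x y _.
- move=> a x y hxy /=; by have [-> _] := HRel.2 x y hxy.
- by move=> phi IH x y hxy /=; rewrite (IH x y hxy).
- by move=> phi1 IH1 phi2 IH2 x y hxy /=; rewrite (IH1 x y hxy) (IH2 x y hxy).
- move=> c p psi IH x y hxy; split.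
    by apply: prob_dir => //; apply: (Rsym Req).
  by apply: prob_dir.
-
  move=> phi IH.
  have hinv : forall f g, (forall i, Rel (f i) (g i)) -> psat L I f (FNext phi) -> psat L I g (FNext phi).
    by move=> f g hfg /=; apply: SF_imp IH _ _ (hfg 1%N).
  split => // P P' hP hP' hQ; apply: (@ev_eq _ 1%N) => // f g hfg /=.
  by rewrite hfg.
-
  move=> phi1 IH1 phi2 IH2.
  have hinv : forall f g, (forall i, Rel (f i) (g i)) ->
      psat L I f (FUntil phi1 phi2) -> psat L I g (FUntil phi1 phi2).
    move=> f g hfg /= [k [i [hik h2 h1]]]; exists k, i; split => //.
      exact: (SF_imp IH2 (hfg _) h2).
    by move=> j hj; apply: (SF_imp IH1 (hfg _)); apply: h1.
  split => // P P' hP hP' hQ.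
  pose Phi k (om : ipath S) := sat L I (om k) phi2 /\
     forall j, (j < k)%N -> sat L I (om j) phi1 /\ ~ sat L I (om j) phi2.
  have hU : [set om | psat L I om (FUntil phi1 phi2)] = \bigcup_k [set om | Phi k om].
    apply/seteqP; split => om /=.
      move=> [k [i [/andP [hi1 hik] h2 h1]]].
      have hex : exists m, `[< sat L I (om m) phi2 >] by exists i.-1; apply/asboolP.
      case: (ex_minnP hex) => m /asboolP hm hmin.
      exists m => //; split => // j hj; split.
        have hmi : (m <= i.-1)%N by apply: hmin; apply/asboolP.
        apply: (h1 j.+1); apply/andP; split => //; lia.
      move=> hj2; have := hmin j; rewrite (asboolT hj2) => /(_ isT); by rewrite leqNgt hj.
    move=> [k _ [h2 h1]]; exists k.+1, k.+1; split => //; first by rewrite ltnS leqnn.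
    by move=> j /andP [hj1 hj2]; case: (h1 j.-1) => //; rewrite -ltnS prednK.
  have hb : forall k f g, (forall i, (i <= k)%N -> f i = g i) -> Phi k f -> Phi k g.
    move=> k f g hfg [h2 h1]; split; first by rewrite -hfg.
    by move=> j hj; rewrite -hfg ?(ltnW hj) //; apply: h1.
  have hinvk : forall k f g, (forall i, Rel (f i) (g i)) -> Phi k f -> Phi k g.
    move=> k f g hfg [h2 h1]; split; first exact: (SF_imp IH2 (hfg _) h2).
    move=> j hj; case: (h1 j hj) => ha hb'; split; first exact: (SF_imp IH1 (hfg _) ha).
    by move=> hc; apply: hb'; apply: (SF_imp IH2 _ hc); apply: (Rsym Req).
  have hm : forall k, cyl_measurable [set om | Phi k om].
    by move=> k; rewrite (evset (hb k)); apply: cm_pev.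
  have ht : trivIset setT (fun k => [set om | Phi k om]).
    move=> k l _ _ [om [[hk2 hk1] [hl2 hl1]]].
    case: (ltngtP k l) => // hkl; first by case: (hl1 k hkl).
    by case: (hk1 l hkl).
  have eqk : forall k, P [set om | Phi k om] = P' [set om | Phi k om].
    by move=> k; apply: (@ev_eq _ k) => //; [apply: hinvk | apply: hb].
  rewrite hU; case: hP => _ _ _ hs; case: hP' => _ _ _ hs'.
  apply: (cvg_eq_lim (hs _ hm ht)).
  under eq_fun => n do under eq_bigr => i _ do rewrite eqk.
  exact: (hs' _ hm ht).
-
  move=> phi1 IH1 phi2 IH2 k.
  have hinv : forall f g, (forall i, Rel (f i) (g i)) ->
      psat L I f (FBUntil phi1 phi2 k) -> psat L I g (FBUntil phi1 phi2 k).
    move=> f g hfg /= [i [hik h2 h1]]; exists i; split => //.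
      exact: (SF_imp IH2 (hfg _) h2).
    by move=> j hj; apply: (SF_imp IH1 (hfg _)); apply: h1.
  split => // P P' hP hP' hQ; apply: (@ev_eq _ k) => // f g hfg /= [i [/andP [hi1 hik] h2 h1]].
  exists i; split; first by rewrite hi1.
    by rewrite -hfg // (leq_trans (leq_pred _) hik).
  move=> j /andP [hj1 hji]; rewrite -hfg; first by apply: h1; rewrite hj1.
  by rewrite (leq_trans (leq_pred _)) // (leq_trans (ltnW hji)).
Qed.

End Main.

Theorem theorem1 (R : realType) (S A AP : finType)
    (L : S -> {set AP}) (I : S -> A -> S -> interval R) :
  imdp_wf I ->
  forall s t : S, forall_bisimilar L I s t ->
  forall phi : sform AP, wf_sform phi -> sat L I s phi <-> sat L I t phi.
Proof.
move=> hwf s t [Rel [hR hst]] phi _.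
exact: (main_ind hwf hR s phi hst).
Qed.
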